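(* Let $(E,\mu)$ and $(F,\nu)$ be fuzzy Riesz spaces and $T:E\rightarrow F$ a fuzzy Riesz homomorphism. If $I_z$ is the fuzzy principal ideal in $E$ generated by an element $z\in E^+$, then $T(I_z)$ is the fuzzy principal ideal in $T(E)$ generated by $Tz$.
   Context: A fuzzy order on a real vector space $E$ is a map $\mu:E\times E\to[0,1]$ with $\mu(x,x)=1$; $\mu(x,y)+\mu(y,x)>1$ implies $x=y$; and $\mu(x,z)\ge\sup_{y}\min(\mu(x,y),\mu(y,z))$. Write $x\le y$ for $\mu(x,y)>\frac12$; suprema/infima are taken with respect to this relation. $(E,\mu)$ is a fuzzy ordered linear space if $\mu(x_1,x_2)>\frac12$ implies $\mu(x_1,x_2)\le\mu(x_1+x,x_2+x)$ for all $x$ and $\mu(x_1,x_2)\le\mu(\alpha x_1,\alpha x_2)$ for all $\alpha>0$; it is a fuzzy Riesz space if $x\vee y=\sup\{x,y\}$ and $x\wedge y=\inf\{x,y\}$ exist for all $x,y$. $E^+=\{x: \mu(0,x)>\frac12\}$, $|x|=x\vee(-x)$. A fuzzy Riesz homomorphism is a linear map with $T(x\vee y)=Tx\vee Ty$; $T(E)$ is a fuzzy Riesz subspace of $F$ regarded as a fuzzy Riesz space with the restricted order. A fuzzy ideal is a vector subspace $A$ such that $\mu(|x|,|y|)>\frac12$ and $y\in A$ imply $x\in A$. The fuzzy principal ideal generated by $x$ is the smallest fuzzy ideal containing $x$. *)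

(* Defs.v *)
From HB Require Import structures.
From mathcomp Require Import all_boot all_order all_algebra.
From mathcomp Require Import classical_sets reals.
Set Implicit Arguments. Unset Strict Implicit. Unset Printing Implicit Defensive.
Import Order.TTheory GRing.Theory Num.Theory.
Local Open Scope ring_scope.
Local Open Scope classical_set_scope.

Section Fuzzy.
Variables (R : realType) (E : lmodType R).
Implicit Types (mu : E -> E -> R) (S A : set E).

(* fuzzy order: values in [0,1]; mu(x,z) >= sup_y min(mu(x,y),mu(y,z))
   is written out as a bound for every y *)
Definition fuzzy_order mu : Prop :=
  [/\ forall x y, 0 <= mu x y <= 1,
      forall x, mu x x = 1,
      forall x y, 1 < mu x y + mu y x -> x = y &
      forall x y z, Num.min (mu x y) (mu y z) <= mu x z].

Definition fle mu (x y : E) : Prop := 2^-1 < mu x y.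

Definition is_sup_in S mu (x y s : E) : Prop :=
  [/\ S s, fle mu x s, fle mu y s &
      forall u, S u -> fle mu x u -> fle mu y u -> fle mu s u].
Definition is_inf_in S mu (x y s : E) : Prop :=
  [/\ S s, fle mu s x, fle mu s y &
      forall u, S u -> fle mu u x -> fle mu u y -> fle mu u s].

Definition fuzzy_ordered_linear_space mu : Prop :=
  fuzzy_order mu /\
  (forall x1 x2, fle mu x1 x2 ->
     (forall x, mu x1 x2 <= mu (x1 + x) (x2 + x)) /\
     (forall a : R, 0 < a -> mu x1 x2 <= mu (a *: x1) (a *: x2))).

Definition fuzzy_riesz_space mu : Prop :=
  fuzzy_ordered_linear_space mu /\
  forall x y, (exists s, is_sup_in setT mu x y s) /\
              (exists i, is_inf_in setT mu x y i).

Definition positive_cone mu : set E := [set x | fle mu 0 x].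

Definition is_abs_in S mu (x a : E) : Prop := is_sup_in S mu x (- x) a.

Definition vsubspace A : Prop :=
  A 0 /\ forall (c : R) x y, A x -> A y -> A (c *: x + y).

Definition fuzzy_ideal_in S mu A : Prop :=
  [/\ A `<=` S, vsubspace A &
      forall x y a b, S x -> S y -> is_abs_in S mu x a -> is_abs_in S mu y b ->
        fle mu a b -> A y -> A x].

Definition fuzzy_principal_ideal_in S mu (z : E) A : Prop :=
  [/\ fuzzy_ideal_in S mu A, A z &
      forall B, fuzzy_ideal_in S mu B -> B z -> A `<=` B].

End Fuzzy.

Definition fuzzy_riesz_hom (R : realType) (E F : lmodType R)
  (mu : E -> E -> R) (nu : F -> F -> R) (T : {linear E -> F}) : Prop :=
  forall x y s, is_sup_in setT mu x y s -> is_sup_in setT nu (T x) (T y) (T s).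

(* Main.v *)
Require Import Defs.
From mathcomp Require Import all_boot all_order all_algebra.
From mathcomp Require Import classical_sets reals.
From mathcomp Require Import lra.
Set Implicit Arguments. Unset Strict Implicit. Unset Printing Implicit Defensive.
Import Order.TTheory GRing.Theory Num.Theory.
Local Open Scope ring_scope.
Local Open Scope classical_set_scope.

Section Aux.
Variables (R : realType) (V : lmodType R) (mu : V -> V -> R).
Hypothesis Hmu : fuzzy_ordered_linear_space mu.

Lemma fle_refl x : fle mu x x.
Proof. case: Hmu => [[_ H1 _ _] _]; rewrite /fle H1; lra. Qed.

Lemma fle_trans x y z : fle mu x y -> fle mu y z -> fle mu x z.
Proof.
case: Hmu => [[_ _ _ H3] _]; rewrite /fle => h1 h2.
apply: lt_le_trans (H3 x y z); by rewrite lt_min h1 h2.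
Qed.

Lemma fle_antisym x y : fle mu x y -> fle mu y x -> x = y.
Proof. case: Hmu => [[_ _ H2 _] _]; rewrite /fle => h1 h2; apply: H2; lra. Qed.

Lemma fle_add x y c : fle mu x y -> fle mu (x + c) (y + c).
Proof.
case: Hmu => _ H hxy; have [Ht _] := H _ _ hxy; exact: lt_le_trans hxy (Ht c).
Qed.

Lemma fle_opp x y : fle mu x y -> fle mu (- y) (- x).
Proof.
move=> /(fle_add (- x - y)).
have -> : x + (- x - y) = - y by rewrite addrA subrr add0r.
by rewrite addrC subrK.
Qed.

Lemma fle_oppl x y : fle mu (- x) y -> fle mu (- y) x.
Proof. by move/fle_opp; rewrite opprK. Qed.

Lemma fle_oppr x y : fle mu x (- y) -> fle mu y (- x).
Proof. by move/fle_opp; rewrite opprK. Qed.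

Lemma sup_unique S x y s s' : is_sup_in S mu x y s -> is_sup_in S mu x y s' -> s = s'.
Proof.
move=> [Ss h1 h2 h3] [Ss' h1' h2' h3']; apply: fle_antisym; [exact: h3|exact: h3'].
Qed.

Lemma sup_ge S x y s : fle mu y x -> S x -> is_sup_in S mu x y s -> s = x.
Proof.
move=> hyx Sx hs; apply: (sup_unique hs); split => //; exact: fle_refl.
Qed.

Lemma sup_restrict S x y s : is_sup_in setT mu x y s -> S s -> is_sup_in S mu x y s.
Proof. by move=> [_ h1 h2 h3] Ss; split => // u _; apply: h3. Qed.

End Aux.

Theorem theorem2p6 (R : realType) (E F : lmodType R)
  (mu : E -> E -> R) (nu : F -> F -> R) (T : {linear E -> F}) (z : E)
  (I : set E) :
  fuzzy_riesz_space mu -> fuzzy_riesz_space nu ->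
  fuzzy_riesz_hom mu nu T ->
  positive_cone mu z ->
  fuzzy_principal_ideal_in setT mu z I ->
  fuzzy_principal_ideal_in (range T) nu (T z) (T @` I).
Proof.
move=> [Hmu hE] [Hnu hF] hT _ [[_ [I0 Ilin] Isol] Iz Imin].
have mono : forall a b, fle mu a b -> fle nu (T a) (T b).
  move=> a b hab.
  have hs : is_sup_in setT mu a b b by split => //; exact: fle_refl.
  by case: (hT _ _ _ hs).
have absT : forall x a, is_abs_in setT mu x a -> is_abs_in (range T) nu (T x) (T a).
  move=> x a ha; have := hT _ _ _ ha; rewrite linearN => h.
  by apply: sup_restrict => //; exists a.
split.
- split.
  + by move=> _ [v _ <-]; exists v.
  + split; first by exists 0 => //; rewrite linear0.
    move=> c _ _ [x Ix <-] [y Iy <-]; exists (c *: x + y); first exact: Ilin.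
    by rewrite linearD linearZ.
  + move=> _ y a b [u _ <-] _ ha hb hab [v Iv ev]; subst y.
    have [[au hau] _] := hE u (- u).
    have [[av hav] _] := hE v (- v).
    have ea : a = T au :=  (sup_unique Hnu ha (absT _ _ hau)).
    have eb : b = T av :=  (sup_unique Hnu hb (absT _ _ hav)).
    subst a b.
    have [[w hw] _] := hE (- u) (- av).
    have [[u' hu'] _] := hE (- w) (- av).
    exists u'.
    * have [[au' hau'] _] := hE u' (- u').
      apply: (Isol u' v au' av) => //.
      case: hau' => _ _ _ L; apply: L => //.
      -- case: hu' => _ _ _ L; apply: L => //.
         ++ apply: (fle_oppl Hmu); by case: hw.
         ++ apply: (fle_trans Hmu (y := v)); last by case: hav.
            apply: (fle_oppl Hmu); by case: hav.
      -- apply: (fle_oppl Hmu); by case: hu'.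
    * have hTu : fle nu (T u) (T av).
        apply: (fle_trans Hnu (y := T au)) => //; by case: (absT _ _ hau).
      have hTnu : fle nu (- T u) (T av).
        apply: (fle_trans Hnu (y := T au)) => //; by case: (absT _ _ hau).
      have ew : T w = - T u.
        have := hT _ _ _ hw; rewrite !linearN => h.
        apply: (sup_ge Hnu _ _ h) => //; exact: fle_opp.
      have := hT _ _ _ hu'; rewrite !linearN ew opprK => h.
      apply: (sup_ge Hnu _ _ h) => //; exact: fle_oppl.
- by exists z.
- move=> B [BS [B0 Blin] Bsol] Bz _ [v Iv <-].
  suff: I `<=` [set x | B (T x)] by apply.
  apply: Imin => //; split; [by [] | split | ].
  + by rewrite /= linear0.
  + by move=> c x y; rewrite /= linearD linearZ; apply: Blin.
  + move=> x y a b _ _ ha hb hab /= By.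
    apply: (Bsol (T x) (T y) (T a) (T b));
      [by exists x | by exists y | exact: absT | exact: absT | exact: mono | exact: By].
Qed.
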